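(* For every integer $n \geqslant 3$, the line graph $L(W_{n+1})$ of the wheel $W_{n+1}$ is not representable.
   Context: All graphs are finite and simple. For a word $W$ over an alphabet, two distinct letters $x,y$ alternate in $W$ if both occur in $W$ and, after erasing all other letters from $W$, one obtains a word of the form $xyxy\ldots$ or $yxyx\ldots$ (an alternating word of any length). A graph $G=(V,E)$ is representable if there exists a word $W$ over the alphabet $V$ in which every vertex occurs, such that for all distinct $x,y\in V$, the letters $x$ and $y$ alternate in $W$ if and only if $(x,y)\in E$. The wheel $W_m$ is the graph obtained from the cycle $C_m$ on $m$ vertices by adding one new vertex adjacent to all vertices of the cycle. The line graph $L(G)$ of a graph $G$ has the edges of $G$ as vertices, two of them being adjacent in $L(G)$ iff they share an endpoint in $G$. *)

(* Defs.v *)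
From mathcomp Require Import all_boot all_order.
Set Implicit Arguments. Unset Strict Implicit. Unset Printing Implicit Defensive.

(* A simple graph is a symmetric irreflexive relation e : rel V on a finType V. *)

Definition alt_word (T : Type) (x y : T) (k : nat) : seq T :=
  mkseq (fun i => if odd i then y else x) k.

Definition alternate (V : eqType) (w : seq V) (x y : V) : bool :=
  [&& x \in w, y \in w &
    let s := filter (fun z => (z == x) || (z == y)) w in
    (s == alt_word x y (size s)) || (s == alt_word y x (size s))].

Definition representable (V : finType) (e : rel V) : Prop :=
  exists w : seq V, (forall v : V, v \in w) /\
    (forall x y : V, x != y -> (alternate w x y <-> e x y)).

Definition cycle_rel (m : nat) : rel 'I_m :=
  fun i j => (i != j) &&
    ((val j == (val i).+1 %% m) || (val i == (val j).+1 %% m)).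

(* Wheel W_m on option 'I_m: None is the hub, Some i are the cycle vertices. *)
Definition wheel_rel (m : nat) : rel (option 'I_m) :=
  fun x y => match x, y with
             | None, None => false
             | None, Some _ | Some _, None => true
             | Some i, Some j => cycle_rel i j
             end.

Definition is_edge (V : finType) (e : rel V) (E : {set V}) : bool :=
  [exists x, exists y, e x y && (E == [set x; y])].

Definition line_rel (V : finType) (e : rel V) : rel {E : {set V} | is_edge e E} :=
  fun E F => (E != F) && (val E :&: val F != set0).

(* Main.v *)
Require Import Defs.
From mathcomp Require Import all_boot all_order.
From Stdlib Require Import Classical.
From mathcomp Require Import zify.
Set Implicit Arguments. Unset Strict Implicit. Unset Printing Implicit Defensive.

Record HM (L : Type) (adj le : L -> L -> Prop) : Prop := {
 hm_refl : forall x, le x x;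
 hm_trans : forall x y z, le x y -> le y z -> le x z;
 hm_anti : forall x y, le x y -> le y x -> x = y;
 hm_sym : forall x y, adj x y -> adj y x;
 hm_irr : forall x, ~ adj x x;
 hm_comp : forall x y, adj x y -> le x y \/ le y x;
 hm_sw : forall x y z, le z y -> le y x -> adj x z -> y <> x -> y <> z ->
   adj x y /\ adj y z }.

Lemma HM_flip L (adj le : L -> L -> Prop) : HM adj le -> HM adj (fun x y => le y x).
Proof.
case=> r t a s i c w; split=> //.
- by move=> x y z h1 h2; apply: t h2 h1.
- by move=> x y h1 h2; apply: a h2 h1.
- by move=> x y /c [];[right|left].
- move=> x y z h1 h2 h3 h4 h5.
  have [] := w z y x h2 h1 (s _ _ h3) h5 h4.
  by move=> /s ? /s ?; split.
Qed.

Record Wheel (L : Type) (adj : L -> L -> Prop) (m : nat) (sp rm : nat -> L) : Prop := {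
 w_spm : forall i, sp i = sp (i %% m);
 w_rmm : forall i, rm i = rm (i %% m);
 w_ss : forall i j, i %% m != j %% m -> adj (sp i) (sp j);
 w_sr : forall i j, j %% m != i %% m -> j %% m != i.+1 %% m -> ~ adj (sp j) (rm i);
 w_sr1 : forall i, adj (sp i) (rm i);
 w_sr2 : forall i, adj (sp i.+1) (rm i);
 w_rr : forall i, adj (rm i) (rm i.+1);
 w_rrn : forall i j, j %% m != i.+1 %% m -> i %% m != j.+1 %% m -> ~ adj (rm i) (rm j);
 w_dsr : forall i j, sp i <> rm j;
 w_sinj : forall i j, sp i = sp j -> i %% m = j %% m;
 w_rinj : forall i j, rm i = rm j -> i %% m = j %% m }.

Arguments w_spm {L adj m sp rm} w i.
Arguments w_rmm {L adj m sp rm} w i.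
Arguments w_ss {L adj m sp rm} w i j _.
Arguments w_sr {L adj m sp rm} w i j _ _ _.
Arguments w_sr1 {L adj m sp rm} w i.
Arguments w_sr2 {L adj m sp rm} w i.
Arguments w_rr {L adj m sp rm} w i.
Arguments w_rrn {L adj m sp rm} w i j _ _ _.
Arguments w_dsr {L adj m sp rm} w i j _.
Arguments w_sinj {L adj m sp rm} w i j _.
Arguments w_rinj {L adj m sp rm} w i j _.
Arguments hm_refl {L adj le} h x.
Arguments hm_trans {L adj le} h {x y z} _ _.
Arguments hm_anti {L adj le} h {x y} _ _.
Arguments hm_sym {L adj le} h {x y} _.
Arguments hm_irr {L adj le} h x _.
Arguments hm_comp {L adj le} h {x y} _.
Arguments hm_sw {L adj le} h {x y z} _ _ _ _ _.

Lemma Wheel_shift L (adj : L -> L -> Prop) m sp rm t :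
  Wheel adj m sp rm -> Wheel adj m (fun i => sp (t + i)) (fun i => rm (t + i)).
Proof.
case=> h1 h2 h3 h4 h5 h6 h7 h8 h9 h10 h11; split.
- by move=> i; rewrite h1 [in RHS]h1 modnDmr.
- by move=> i; rewrite h2 [in RHS]h2 modnDmr.
- by move=> i j H; apply: h3; rewrite eqn_modDl.
- by move=> i j H1 H2; apply: h4; rewrite -?addnS eqn_modDl.
- by [].
- by move=> i; rewrite addnS.
- by move=> i; rewrite addnS.
- by move=> i j H1 H2; apply: h8; rewrite -?addnS eqn_modDl.
- by [].
- by move=> i j /h10/eqP; rewrite eqn_modDl => /eqP.
- by move=> i j /h11/eqP; rewrite eqn_modDl => /eqP.
Qed.

Lemma nmod m a b i : a < m -> b < m -> a != b -> (a + i) %% m != (b + i) %% m.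
Proof. by move=> ha hb hab; rewrite !(addnC _ i) eqn_modDl !modn_small. Qed.

Lemma mn1 m i : 2 < m -> i %% m != i.+1 %% m.
Proof. move=> h; have := @nmod m 0 1 i; rewrite add0n add1n; apply; lia. Qed.
Lemma mn2 m i : 2 < m -> i %% m != i.+2 %% m.
Proof. move=> h; have := @nmod m 0 2 i; rewrite add0n add2n; apply; lia. Qed.
Lemma mn3 m i : 3 < m -> i %% m != i.+3 %% m.
Proof. move=> h; have := @nmod m 0 3 i; rewrite add0n add3n; apply; lia. Qed.
Lemma mn1' m i : 2 < m -> i.+1 %% m != i %% m.
Proof. by move=> h; rewrite eq_sym mn1. Qed.
Lemma mn2' m i : 2 < m -> i.+2 %% m != i %% m.
Proof. by move=> h; rewrite eq_sym mn2. Qed.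
Lemma mn3' m i : 3 < m -> i.+3 %% m != i %% m.
Proof. by move=> h; rewrite eq_sym mn3. Qed.

Definition above L (le : L -> L -> Prop) (sp rm : nat -> L) i :=
  le (sp i) (rm i) /\ le (sp i.+1) (rm i).
Definition below L (le : L -> L -> Prop) (sp rm : nat -> L) i :=
  le (rm i) (sp i) /\ le (rm i) (sp i.+1).
Definition nb L (le : L -> L -> Prop) (sp rm : nat -> L) i :=
  above le sp rm i \/ below le sp rm i.

Lemma nb_flip L (le : L -> L -> Prop) sp rm i :
  nb le sp rm i -> nb (fun x y => le y x) sp rm i.
Proof. by case=> [h|h]; [right|left]. Qed.


Lemma neq_ss L adj m (sp rm : nat -> L) (W : Wheel adj m sp rm) i j :
  i %% m != j %% m -> sp i <> sp j.
Proof. by move=> h /(w_sinj W)/eqP; rewrite (negbTE h). Qed.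
Lemma neq_rr L adj m (sp rm : nat -> L) (W : Wheel adj m sp rm) i j :
  i %% m != j %% m -> rm i <> rm j.
Proof. by move=> h /(w_rinj W)/eqP; rewrite (negbTE h). Qed.
Lemma neq_sr L adj m (sp rm : nat -> L) (W : Wheel adj m sp rm) i j : sp i <> rm j.
Proof. exact: (@w_dsr _ _ _ _ _ W i j). Qed.
Lemma neq_rs L adj m (sp rm : nat -> L) (W : Wheel adj m sp rm) i j : rm j <> sp i.
Proof. by move/esym; apply: (@w_dsr _ _ _ _ _ W i j). Qed.

Arguments neq_ss {L adj m sp rm} W {i j}.
Arguments neq_rr {L adj m sp rm} W {i j}.
Arguments neq_sr {L adj m sp rm} W {i j}.
Arguments neq_rs {L adj m sp rm} W {i j}.
Arguments mn1 {m} i. Arguments mn2 {m} i. Arguments mn3 {m} i.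
Arguments mn1' {m} i. Arguments mn2' {m} i. Arguments mn3' {m} i.

Ltac mn := solve [ apply: mn1; lia | apply: mn2; lia | apply: mn3; lia
                 | apply: mn1'; lia | apply: mn2'; lia | apply: mn3'; lia ].

Lemma localmax L adj le m (sp rm : nat -> L) (H : HM adj le) (W : Wheel adj m sp rm) i :
  3 < m -> le (sp i) (sp i.+1) -> le (sp i.+2) (sp i.+1) ->
  nb le sp rm i -> nb le sp rm i.+1 -> False.
Proof.
move=> hm s01 s21.
have T : forall x y z, le x y -> le y z -> le x z := fun x y z => @hm_trans _ _ _ H x y z.
have NSR j k : j %% m != k %% m -> j %% m != k.+1 %% m -> adj (sp j) (rm k) -> False.
  by move=> h1 h2; apply: (w_sr W _ _ h1 h2).
have NRS j k : j %% m != k %% m -> j %% m != k.+1 %% m -> adj (rm k) (sp j) -> False.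
  by move=> h1 h2 /(hm_sym H); apply: NSR h1 h2.
case=> [[a1 a2]|[b1 b2]] [[c1 c2]|[d1 d2]].
- case: (hm_comp H (w_rr W i)) => h.
  + have [] := hm_sw H (x := rm i.+1) (y := rm i) (z := sp i.+2) (T _ _ _ s21 a2) h
      (hm_sym H (w_sr2 W _)) (neq_rr W (mn1 i _)) (neq_rs W); first lia.
    by move=> _; apply: NRS; mn.
  + have [] := hm_sw H (x := rm i) (y := rm i.+1) (z := sp i) (T _ _ _ s01 c1) h
      (hm_sym H (w_sr1 W _)) (neq_rr W (mn1' i _)) (neq_rs W); first lia.
    by move=> _; apply: NRS; mn.
- have [] := hm_sw H (x := rm i) (y := sp i.+2) d2 (T _ _ _ s21 a2) (w_rr W _)
     (neq_sr W) (neq_sr W).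
  by move=> /(hm_sym H) hh _; move: hh; apply: NSR; mn.
- have [] := hm_sw H (x := rm i.+1) (y := sp i) b1 (T _ _ _ s01 c1) (hm_sym H (w_rr W _))
     (neq_sr W) (neq_sr W).
  by move=> /(hm_sym H) hh _; move: hh; apply: NSR; mn.
- case: (hm_comp H (w_rr W i)) => h.
  + have [] := hm_sw H (x := sp i.+1) (y := sp i.+2) (T _ _ _ h d2) s21 (w_sr2 W _)
      (neq_ss W (mn1' i.+1 _)) (neq_sr W); first lia.
    by move=> _; apply: NSR; mn.
  + have [] := hm_sw H (x := sp i.+1) (y := sp i) (T _ _ _ h b1) s01 (w_sr1 W _)
      (neq_ss W (mn1 i _)) (neq_sr W); first lia.
    by move=> _; apply: NSR; mn.
Qed.

Lemma mono L adj le m (sp rm : nat -> L) (H : HM adj le) (W : Wheel adj m sp rm) i :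
  3 < m -> nb le sp rm i -> nb le sp rm i.+1 ->
  le (sp i) (sp i.+1) -> le (sp i.+1) (sp i.+2).
Proof.
move=> hm n1 n2 s01.
case: (hm_comp H (w_ss W _ _ (mn1 i.+1 _))) => //; first lia.
by move=> h; case: (localmax H W hm s01 h n1 n2).
Qed.

Lemma mono_dn L adj le m (sp rm : nat -> L) (H : HM adj le) (W : Wheel adj m sp rm) i :
  3 < m -> nb le sp rm i -> nb le sp rm i.+1 ->
  le (sp i.+1) (sp i) -> le (sp i.+2) (sp i.+1).
Proof.
move=> hm n1 n2.
exact: (mono (HM_flip H) W hm (nb_flip n1) (nb_flip n2)).
Qed.

Lemma caseA L adj le m (sp rm : nat -> L) (H : HM adj le) (W : Wheel adj m sp rm) :
  3 < m -> (forall i, nb le sp rm i) -> le (sp 0) (sp 1) -> False.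
Proof.
move=> hm hn s01.
have up k : le (sp k) (sp k.+1).
  elim: k => [|k IH]; first exact: s01.
  exact: (mono H W hm (hn _) (hn _) IH).
have up2 k : le (sp 1) (sp k.+1).
  elim: k => [|k IH]; first exact: (hm_refl H _).
  by apply: (hm_trans H IH); apply: up.
have := up2 m.-1; rewrite prednK; last lia.
rewrite (w_spm W m) modnn => h.
have := hm_anti H s01 h.
apply: (neq_ss W (mn1 0 _)); lia.
Qed.

Lemma topgen L adj le m (sp rm : nat -> L) (H : HM adj le) (W : Wheel adj m sp rm) i a b :
  3 < m -> (a = i /\ b = i.+1) \/ (a = i.+1 /\ b = i) ->
  le (sp b) (rm i) -> le (rm i) (sp a) -> forall j, le (sp j) (sp a).
Proof.
move=> hm hab h1 h2 j.
have T : forall x y z, le x y -> le y z -> le x z := fun x y z => @hm_trans _ _ _ H x y z.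
have ab : a %% m != b %% m.
  by case: hab => -[-> ->]; [apply: mn1 | apply: mn1']; lia.
case: (eqVneq (j %% m) (a %% m)) => ja.
  by rewrite (w_spm W j) ja -(w_spm W a); exact: (hm_refl H _).
case: (eqVneq (j %% m) (b %% m)) => jb.
  by rewrite (w_spm W j) jb -(w_spm W b); apply: T h1 h2.
case: (hm_comp H (w_ss W _ _ ja)) => // h.
have [] := hm_sw H (x := sp j) (y := rm i) (z := sp b) h1 (T _ _ _ h2 h) (w_ss W _ _ jb)
  (neq_rs W) (neq_rs W).
move=> hh _; exfalso; apply: (w_sr W i j _ _ hh).
  by case: hab => -[ea eb]; subst a b.
by case: hab => -[ea eb]; subst a b.
Qed.

Definition form1 L (le : L -> L -> Prop) (sp rm : nat -> L) i :=
  le (sp i.+1) (rm i) /\ le (rm i) (sp i).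
Definition form2 L (le : L -> L -> Prop) (sp rm : nat -> L) i :=
  le (sp i) (rm i) /\ le (rm i) (sp i.+1).

Lemma form1_tb L adj le m (sp rm : nat -> L) (H : HM adj le) (W : Wheel adj m sp rm) i :
  3 < m -> form1 le sp rm i ->
  (forall j, le (sp j) (sp i)) /\ (forall j, le (sp i.+1) (sp j)).
Proof.
move=> hm [h1 h2]; split.
  by apply: (topgen H W hm _ h1 h2); left.
by apply: (topgen (HM_flip H) W hm (i:=i) (a:=i.+1) (b:=i) _ h2 h1); right.
Qed.

Lemma form2_tb L adj le m (sp rm : nat -> L) (H : HM adj le) (W : Wheel adj m sp rm) i :
  3 < m -> form2 le sp rm i ->
  (forall j, le (sp j) (sp i.+1)) /\ (forall j, le (sp i) (sp j)).
Proof.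
move=> hm [h1 h2]; split.
  by apply: (topgen H W hm _ h1 h2); right.
by apply: (topgen (HM_flip H) W hm (i:=i) (a:=i) (b:=i.+1) _ h2 h1); left.
Qed.

Lemma not_nb L adj le m (sp rm : nat -> L) (H : HM adj le) (W : Wheel adj m sp rm) i :
  ~ nb le sp rm i -> form1 le sp rm i \/ form2 le sp rm i.
Proof.
move=> hn.
case: (hm_comp H (w_sr1 W i)) => h1; case: (hm_comp H (w_sr2 W i)) => h2.
- by case: hn; left.
- by right.
- by left.
- by case: hn; right.
Qed.

Lemma nb_or L adj le m (sp rm : nat -> L) (H : HM adj le) (W : Wheel adj m sp rm) i :
  nb le sp rm i \/ form1 le sp rm i \/ form2 le sp rm i.
Proof.
case: (hm_comp H (w_sr1 W i)) => h1; case: (hm_comp H (w_sr2 W i)) => h2.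
- by left; left.
- by right; right.
- by right; left.
- by left; right.
Qed.

Lemma P1 L adj le m (sp rm : nat -> L) (H : HM adj le) (W : Wheel adj m sp rm) i :
  3 < m -> le (sp i) (sp i.+1) -> below le sp rm i -> above le sp rm i.+1 -> False.
Proof.
move=> hm s01 [b1 b2] [c1 c2].
have T : forall x y z, le x y -> le y z -> le x z := fun x y z => @hm_trans _ _ _ H x y z.
have [] := hm_sw H (x := rm i.+1) (y := sp i) b1 (T _ _ _ s01 c1) (hm_sym H (w_rr W _))
     (neq_sr W) (neq_sr W).
move=> /(hm_sym H) hh _; apply: (w_sr W i.+1 i _ _ hh); mn.
Qed.

Lemma P2 L adj le m (sp rm : nat -> L) (H : HM adj le) (W : Wheel adj m sp rm) i :
  3 < m -> le (sp i) (sp i.+1) -> below le sp rm i -> below le sp rm i.+1 ->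
  le (rm i) (rm i.+1).
Proof.
move=> hm s01 [b1 b2] [d1 d2].
have T : forall x y z, le x y -> le y z -> le x z := fun x y z => @hm_trans _ _ _ H x y z.
case: (hm_comp H (w_rr W i)) => // h.
have [] := hm_sw H (x := sp i.+1) (y := sp i) (T _ _ _ h b1) s01 (w_sr1 W _)
      (neq_ss W (mn1 i _)) (neq_sr W); first lia.
by move=> _ hh; exfalso; apply: (w_sr W i.+1 i _ _ hh); mn.
Qed.

Lemma P3 L adj le m (sp rm : nat -> L) (H : HM adj le) (W : Wheel adj m sp rm) i :
  3 < m -> le (sp i.+1) (sp i.+2) -> above le sp rm i -> above le sp rm i.+1 ->
  le (rm i) (rm i.+1).
Proof.
move=> hm s12 [a1 a2] [c1 c2].
have T : forall x y z, le x y -> le y z -> le x z := fun x y z => @hm_trans _ _ _ H x y z.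
case: (hm_comp H (w_rr W i)) => // h.
have [] := hm_sw H (x := rm i) (y := sp i.+2) (z := sp i.+1) s12 (T _ _ _ c2 h)
      (hm_sym H (w_sr2 W _)) (neq_sr W) (neq_ss W (mn1' i.+1 _)); first lia.
by move=> /(hm_sym H) hh _; exfalso; apply: (w_sr W i i.+2 _ _ hh); mn.
Qed.

Lemma P4 L adj le m (sp rm : nat -> L) (H : HM adj le) (W : Wheel adj m sp rm) i :
  above le sp rm i -> below le sp rm i.+1 -> le (rm i.+1) (rm i).
Proof. by move=> [a1 a2] [d1 d2]; apply: (hm_trans H d1 a2). Qed.

Lemma caseB0 L adj le m (sp rm : nat -> L) (H : HM adj le) (W : Wheel adj m sp rm) :
  3 < m -> le (sp 0) (rm m.-1) -> le (rm m.-1) (sp m.-1) -> False.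
Proof.
move=> hm hR0 hR1.
have T : forall x y z, le x y -> le y z -> le x z := fun x y z => @hm_trans _ _ _ H x y z.
have ms : (m.-1).+1 = m by lia.
have sm : sp m = sp 0 by rewrite (w_spm W m) modnn.
have rmm : rm m = rm 0 by rewrite (w_rmm W m) modnn.
have f1 : form1 le sp rm m.-1 by split => //; rewrite ms sm.
have [top bot] := form1_tb H W hm f1; rewrite ms sm in bot.
have spinj j k : j < m -> k < m -> le (sp j) (sp k) -> le (sp k) (sp j) -> j = k.
  by move=> hj hk h1 h2; have := w_sinj W _ _ (hm_anti H h1 h2); rewrite !modn_small.
have NB j : j <= m - 2 -> nb le sp rm j.
  move=> hj; case: (nb_or H W j) => [//|[f|f]].
  - have [t _] := form1_tb H W hm f.
    have : j = m.-1 by apply: (spinj j m.-1 _ _ (top j) (t m.-1)); lia.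
    lia.
  - have [t b] := form2_tb H W hm f.
    have e0 : j = 0 by apply: (spinj j 0 _ _ (b 0) (bot j)); lia.
    subst j.
    have : 1 = m.-1 by apply: (spinj 1 m.-1 _ _ (top 1) (t m.-1)); lia.
    lia.
have UP j : j.+1 <= m.-1 -> le (sp j) (sp j.+1).
  elim: j => [_|j IH hj]; first exact: bot.
  apply: (mono H W hm (NB j _) (NB j.+1 _) (IH _)); lia.
set R := rm m.-1.
have adjR0 : adj R (rm 0) by have := w_rr W m.-1; rewrite ms rmm.
have adjs0R : adj (sp 0) R by have := w_sr2 W m.-1; rewrite ms sm.
have nR_s j : 0 < j < m.-1 -> ~ adj (sp j) R.
  move=> hj; apply: (w_sr W m.-1 j); rewrite ?ms ?modnn !modn_small; lia.
have nR_r j : 0 < j < m - 2 -> ~ adj (rm j) R.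
  move=> hj; apply: (w_rrn W j m.-1); rewrite ?ms ?modnn !modn_small; lia.
have A j : j <= m - 2 -> above le sp rm j -> le R (rm j).
  elim: j => [_|j IH hj] aj.
  - case: (hm_comp H adjR0) => // h.
    have [] := hm_sw H (x := R) (y := sp 1) (z := sp 0) (UP 0 _) (T _ _ _ aj.2 h)
      (hm_sym H adjs0R) (neq_sr W) (neq_ss W (mn1' 0 _)); try lia.
    by move=> /(hm_sym H) hh _; case: (nR_s 1 _ hh); lia.
  - case: (NB j _) => [|bj|aj0]; first lia.
    + apply: T (IH _ bj) (P3 H W hm (UP j.+1 _) bj aj); lia.
    + by case: (P1 H W hm (UP j _) aj0 aj); lia.
have B k : forall j, j + k = m - 2 -> below le sp rm j -> le (rm j) R.
  elim: k => [|k IH] j hjk bj.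
  - have ej : j = m - 2 by lia.
    have adjR : adj (rm j) R.
      by have := w_rr W (m - 2); rewrite ej (_ : (m - 2).+1 = m.-1) //; lia.
    case: (hm_comp H adjR) => // h.
    have [] := hm_sw H (x := sp j) (y := R) (z := sp 0) hR0 (T _ _ _ h bj.1)
      (w_ss W _ _ _) (neq_rs W) (neq_rs W).
    + by rewrite !modn_small; lia.
    + by move=> hh _; case: (nR_s j _ hh); lia.
  - case: (NB j.+1 _) => [|aj1|bj1]; first lia.
    + by case: (P1 H W hm (UP j _) bj aj1); lia.
    + apply: T (P2 H W hm (UP j _) bj bj1) (IH _ _ bj1); lia.
have trans_ex j : j <= m - 2 -> above le sp rm 0 -> below le sp rm j ->
    exists a, [/\ a < j, above le sp rm a & below le sp rm a.+1].
  elim: j => [_ a0 b0|j IH hj a0 bj].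
    have := hm_anti H b0.1 a0.1 => e; case: (neq_sr W (esym e)).
  case: (NB j _) => [|aj|bj0]; first lia.
  - by exists j.
  - have [|a [h1 h2 h3]] := IH _ a0 bj0; first lia.
    by exists a; split => //; lia.
case: (NB 0 _) => [|a0|b0]; first lia.
- case: (NB (m - 2) _) => [|am|bm]; first lia.
  + have e3 : (m - 3).+1 = m - 2 by lia.
    case: (NB (m - 3) _) => [|a3|b3]; first lia.
    * have h1 := A _ _ a3.
      have h2 := P3 H W hm (UP (m - 3).+1 _) a3; rewrite e3 in h2.
      have h3 := h2 _ am.
      have adjR : adj (rm (m - 2)) R.
        by have := w_rr W (m - 2); rewrite (_ : (m - 2).+1 = m.-1) //; lia.
      have [] := hm_sw H (x := rm (m - 2)) (y := rm (m - 3)) (z := R) (h1 _) (h3 _) adjR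
        (neq_rr W _) (neq_rr W _).
      all: try lia.
      all: try (by rewrite !modn_small; lia).
      by move=> _ hh; case: (nR_r (m - 3) _ hh); lia.
    * have u : le (sp (m - 3)) (sp (m - 3).+1) by apply: UP; lia.
      by case: (P1 H W hm u b3); rewrite e3.
  + have [|a [ha aa ba]] := trans_ex (m - 2) _ a0 bm; first lia.
    have [] := hm_sw H (x := rm a) (y := R) (z := rm a.+1) (B (m - 2 - a.+1) a.+1 _ ba) (A _ _ aa)
       (w_rr W a) (neq_rr W _) (neq_rr W _).
    all: try lia.
    all: try (by rewrite !modn_small; lia).
    move=> h1 h2; case: (posnP a) => [a0'|ap].
    * subst a; case: (nR_r 1 _ (hm_sym H h2)); lia.
    * case: (nR_r a _ h1); lia.
- case: (NB 1 _) => [|a1|b1]; first lia.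
  + by case: (P1 H W hm (UP 0 _) b0 a1); lia.
  + have h1 := P2 H W hm (UP 0 _) b0 b1.
    have [] := hm_sw H (x := R) (y := rm 1) (z := rm 0) (h1 _) (B (m - 3) 1 _ b1) adjR0
       (neq_rr W _) (neq_rr W _).
    all: try lia.
    all: try (by rewrite !modn_small; lia).
    by move=> /(hm_sym H) hh _; case: (nR_r 1 _ hh); lia.
Qed.

Lemma caseB L adj le m (sp rm : nat -> L) (H : HM adj le) (W : Wheel adj m sp rm) k :
  3 < m -> form1 le sp rm k -> False.
Proof.
move=> hm [h1 h2].
have W' := Wheel_shift k.+1 W.
have e : k.+1 + m.-1 = k + m by lia.
have sk : sp (k + m) = sp k by rewrite (w_spm W) modnDr -(w_spm W).
have rk : rm (k + m) = rm k by rewrite (w_rmm W) modnDr -(w_rmm W).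
apply: (caseB0 H W' hm) => /=; rewrite ?addn0 e ?sk ?rk //.
Qed.

Lemma wheel_contra L adj le m (sp rm : nat -> L) (H : HM adj le) (W : Wheel adj m sp rm) :
  3 < m -> False.
Proof.
move=> hm.
case: (classic (exists k, ~ nb le sp rm k)) => [[k hk]|hn].
  case: (not_nb H W hk) => [f|[f1 f2]].
    exact: (caseB H W hm f).
  exact: (caseB (HM_flip H) W hm (conj f2 f1)).
have hnb i : nb le sp rm i.
  by apply: NNPP => h; apply: hn; exists i.
have a01 : adj (sp 0) (sp 1) by apply: (w_ss W); rewrite !modn_small; lia.
case: (hm_comp H a01) => h.
  exact: (caseA H W hm hnb h).
exact: (caseA (HM_flip H) W hm (fun i => nb_flip (hnb i)) h).
Qed.

Lemma alt_cons (T : Type) (x y : T) k : alt_word x y k.+1 = x :: alt_word y x k.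
Proof.
apply: (@eq_from_nth _ x); first by rewrite /alt_word /= size_map size_iota size_mkseq.
move=> i; rewrite /alt_word size_mkseq => hi.
rewrite nth_mkseq //; case: i hi => [|i] hi //=.
by rewrite nth_mkseq //; case: (odd i).
Qed.

Definition Du (T : eqType) (u : seq T) (x y : T) :=
  forall p, count_mem y (take p u) <= count_mem x (take p u) <= count_mem y (take p u) + 1.

Lemma Du_core (T : eqType) (u : seq T) : forall x y : T, x != y ->
  (filter (fun z => (z == x) || (z == y)) u ==
     alt_word x y (size (filter (fun z => (z == x) || (z == y)) u))) <-> Du u x y.
Proof.
elim: u => [|z u IH] x y nxy.
  by split=> // _ p; rewrite take_nil.
have fs : filter (fun z => (z == y) || (z == x)) u = filter (fun z => (z == x) || (z == y)) u.
  by apply: eq_filter => v; rewrite orbC.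
case: (eqVneq z x) => [->|zx].
  rewrite /= eqxx /= alt_cons eqseq_cons eqxx /=.
  rewrite -fs (IH y x); last by rewrite eq_sym.
  split=> h.
    case=> [|p] //=; rewrite (negbTE nxy) eqxx /=; have := h p; lia.
  move=> p; have := h p.+1; rewrite /= (negbTE nxy) eqxx /=; lia.
case: (eqVneq z y) => [->|zy].
  rewrite /= eqxx orbT alt_cons eqseq_cons eq_sym (negbTE nxy) /=.
  split=> // h; have := h 1; rewrite /= eqxx eq_sym (negbTE nxy) /= take0 /=; lia.
rewrite /= (negbTE zx) (negbTE zy) /= IH //.
split=> h.
  case=> [|p] //=; rewrite (negbTE zx) (negbTE zy) /=; apply: h.
by move=> p; have := h p.+1; rewrite /= (negbTE zx) (negbTE zy).
Qed.

Lemma alternateE (T : eqType) (w : seq T) x y : x != y ->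
  alternate w x y <-> [/\ x \in w, y \in w & Du w x y \/ Du w y x].
Proof.
move=> nxy; rewrite /alternate.
have nyx : y != x by rewrite eq_sym.
have fs : filter (fun z => (z == y) || (z == x)) w = filter (fun z => (z == x) || (z == y)) w.
  by apply: eq_filter => v; rewrite orbC.
split.
  case/and3P=> hx hy /orP [h|h]; split=> //.
    by left; apply/(Du_core w nxy).
  by right; apply/(Du_core w nyx); rewrite fs.
case=> hx hy [h|h]; rewrite hx hy /=; apply/orP.
  by left; apply/(Du_core w nxy).
by right; rewrite -fs; apply/(Du_core w nyx).
Qed.

Definition lew (T : eqType) (w : seq T) (x y : T) :=
  forall p, count_mem x (take p w) <= count_mem y (take p w).

Lemma lew_anti (T : eqType) (w : seq T) x y : x \in w -> lew w x y -> lew w y x -> x = y.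
Proof.
move=> hx h1 h2; case: (eqVneq x y) => // nxy; exfalso.
have hi : index x w < size w by rewrite index_mem.
have := h1 (index x w).+1; have := h2 (index x w).+1.
have := h1 (index x w); have := h2 (index x w).
rewrite (take_nth x hi) nth_index // -!cats1 !count_cat /= eqxx.
rewrite (negbTE nxy) /=; lia.
Qed.

Lemma HM_word (T : eqType) (w : seq T) (e : rel T) :
  (forall v, v \in w) -> (forall x y, x != y -> (alternate w x y <-> e x y)) ->
  (forall x, ~~ e x x) -> (forall x y, e x y -> e y x) ->
  HM (fun x y => e x y) (lew w).
Proof.
move=> hall hrep hirr hsym.
have eneq x y : e x y -> x != y by apply: contraTneq => ->; apply: hirr.
have anti x y : lew w x y -> lew w y x -> x = y by apply: lew_anti.
split.
- by move=> x p.
- by move=> x y z h1 h2 p; apply: leq_trans (h1 p) (h2 p).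
- exact: anti.
- by move=> x y /hsym.
- by move=> x h; move: (hirr x); rewrite h.
- move=> x y hxy; have := hrep _ _ (eneq _ _ hxy); case=> _ /(_ hxy).
  case/(alternateE _ (eneq _ _ hxy)) => _ _ [h|h]; [right|left] => p; have := h p; lia.
- move=> x y z h1 h2 hxz nyx nyz.
  have nxz := eneq _ _ hxz.
  have := hrep _ _ nxz; case=> _ /(_ hxz).
  case/(alternateE _ nxz) => _ _ [h|h]; last first.
    have ezx : lew w x z by move=> p; have := h p; lia.
    have : lew w z x by move=> p; apply: leq_trans (h1 p) (h2 p).
    by move/(anti _ _ ezx) => exz; move: hxz; rewrite exz (negbTE (hirr z)).
  have nxy : x != y by apply/eqP => exy; apply: nyx.
  have nyz' : y != z by apply/eqP.
  split.
  + apply/(hrep _ _ nxy)/(alternateE _ nxy); split => //; left => p.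
    by have := h p; have := h1 p; have := h2 p; lia.
  + apply/(hrep _ _ nyz')/(alternateE _ nyz'); split => //; left => p.
    by have := h p; have := h1 p; have := h2 p; lia.
Qed.


Definition ordm (n i : nat) : 'I_n.+1 := Ordinal (ltn_pmod i (ltn0Sn n)).

Lemma ordm_eq n i j : (ordm n i == ordm n j) = (i %% n.+1 == j %% n.+1).
Proof. by []. Qed.

Lemma ordm_mod n i : ordm n (i %% n.+1) = ordm n i.
Proof. by apply: val_inj; rewrite /= modn_mod. Qed.

Lemma ordm_modS n i : ordm n (i %% n.+1).+1 = ordm n i.+1.
Proof. by apply: val_inj; rewrite /= -addn1 modnDml addn1. Qed.

Definition spS n (a : 'I_n.+1) : {set option 'I_n.+1} := [set None; Some a].
Definition rmS n (a : 'I_n.+1) : {set option 'I_n.+1} := [set Some a; Some (ordm n a.+1)].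

Lemma spS_edge n a : is_edge (@wheel_rel n.+1) (spS a).
Proof. by apply/existsP; exists None; apply/existsP; exists (Some a); rewrite /= eqxx. Qed.

Lemma rmS_edge n a : 1 < n -> is_edge (@wheel_rel n.+1) (@rmS n a).
Proof.
move=> hn; apply/existsP; exists (Some a); apply/existsP; exists (Some (ordm n a.+1)).
rewrite eqxx andbT /= /cycle_rel.
have ha : a = ordm n a by apply: val_inj; rewrite /= modn_small.
have -> : (a == ordm n a.+1) = false by rewrite {1}ha ordm_eq (negbTE (mn1 _ _)) //; lia.
by rewrite /= eqxx.
Qed.

Definition VT n := {E : {set option 'I_n.+1} | is_edge (@wheel_rel n.+1) E}.

Definition spO n (a : 'I_n.+1) : VT n := exist _ (spS a) (spS_edge a).
Definition rmO n (hn : 1 < n) (a : 'I_n.+1) : VT n := exist _ (rmS a) (rmS_edge a hn).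
Definition spV n i : VT n := spO (ordm n i).
Definition rmV n (hn : 1 < n) i : VT n := rmO hn (ordm n i).

Lemma vsp n i : val (spV n i) = [set None; Some (ordm n i)].
Proof. reflexivity. Qed.
Lemma vrm n (hn : 1 < n) i : val (rmV hn i) = [set Some (ordm n i); Some (ordm n i.+1)].
Proof. change (rmS (ordm n i) = [set Some (ordm n i); Some (ordm n i.+1)]); by rewrite /rmS ordm_modS. Qed.

Lemma lr_intro n (E F : VT n) v u : v \in val E -> v \in val F -> u \in val E -> u \notin val F ->
  @line_rel _ (@wheel_rel n.+1) E F.
Proof.
move=> h1 h2 h3 h4; apply/andP; split.
  by apply/eqP => e; move: h4; rewrite -e h3.
by apply/set0Pn; exists v; rewrite inE h1 h2.
Qed.

Lemma lr_elim n (E F : VT n) : @line_rel _ (@wheel_rel n.+1) E F ->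
  E <> F /\ exists v, v \in val E /\ v \in val F.
Proof.
case/andP => /eqP h /set0Pn [v]; rewrite inE => /andP [h1 h2]; split => //.
by exists v.
Qed.

Lemma ordm_inj n i j : ordm n i = ordm n j -> i %% n.+1 = j %% n.+1.
Proof. by move/eqP; rewrite ordm_eq => /eqP. Qed.

Lemma modS_inj m i j : i.+1 %% m = j.+1 %% m -> i %% m = j %% m.
Proof. by move/eqP; rewrite -(addn1 i) -(addn1 j) eqn_modDr => /eqP. Qed.

Lemma modS_cong m i j : i %% m = j %% m -> i.+1 %% m = j.+1 %% m.
Proof. by move/eqP; rewrite -(eqn_modDr 1) !addn1 => /eqP. Qed.

Definition ADJ n : VT n -> VT n -> Prop := fun x y => is_true (@line_rel _ (@wheel_rel n.+1) x y).
Arguments ADJ : clear implicits.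

Lemma wheelV n (hn1 : 1 < n) : 2 < n -> Wheel (ADJ n) n.+1 (spV n) (rmV hn1).
Proof.
move=> hn; rewrite /ADJ.
have hsm i : spV n i = spV n (i %% n.+1).
  by rewrite /spV (ordm_mod n i).
have hrmm i : rmV hn1 i = rmV hn1 (i %% n.+1).
  by rewrite /rmV (ordm_mod n i).
have oN (a b : 'I_n.+1) : (Some a == Some b) = (a == b) by [].
split.
- exact: hsm.
- exact: hrmm.
- move=> i j hij; apply: (@lr_intro _ _ _ None (Some (ordm n i))).
  + by rewrite !vsp !inE.
  + by rewrite !vsp !inE.
  + by rewrite !vsp !inE eqxx orbT.
  + by rewrite !vsp !inE oN ordm_eq (negbTE hij).
- move=> i j h1 h2 /lr_elim [_ [v []]].
  rewrite !vsp !vrm !inE => /orP [/eqP ->|/eqP ->] //.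
  rewrite !oN !ordm_eq => /orP [] /eqP e.
    by move: h1; rewrite e eqxx.
  by move: h2; rewrite e eqxx.
- move=> i; apply: (@lr_intro _ _ _ (Some (ordm n i)) None).
  + by rewrite !vsp !inE eqxx orbT.
  + by rewrite !vrm !inE eqxx.
  + by rewrite !vsp !inE.
  + by rewrite !vrm !inE.
- move=> i; apply: (@lr_intro _ _ _ (Some (ordm n i.+1)) None).
  + by rewrite !vsp !inE eqxx orbT.
  + by rewrite !vrm !inE eqxx orbT.
  + by rewrite !vsp !inE.
  + by rewrite !vrm !inE.
- move=> i; apply: (@lr_intro _ _ _ (Some (ordm n i.+1)) (Some (ordm n i))).
  + by rewrite !vrm !inE eqxx orbT.
  + by rewrite !vrm !inE eqxx.
  + by rewrite !vrm !inE eqxx.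
  + rewrite !vrm !inE !oN !ordm_eq negb_or (mn1 i) ?(mn2 i) //; lia.
- move=> i j h1 h2 /lr_elim [ne [v []]].
  rewrite !vrm !inE => /orP [] /eqP ->; rewrite !oN !ordm_eq => /orP [] /eqP e.
  + by apply: ne; rewrite hrmm e -hrmm.
  + by move: h2; rewrite e eqxx.
  + by move: h1; rewrite e eqxx.
  + by apply: ne; rewrite hrmm (modS_inj e) -hrmm.
- by move=> i j /(congr1 val); rewrite !vsp !vrm => /setP /(_ None); rewrite !inE eqxx.
- move=> i j /(congr1 val); rewrite !vsp => /setP /(_ (Some (ordm n i))); rewrite !inE eqxx orbT /=.
  by rewrite oN => /esym /eqP /ordm_inj.
- move=> i j /(congr1 val); rewrite !vrm => /setP e.
  have := e (Some (ordm n i)); have := e (Some (ordm n j)).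
  rewrite !inE !oN !eqxx /= !ordm_eq.
  move=> /orP [/eqP e1|/eqP e4] /esym /orP [/eqP e2|/eqP e3] //.
  all: try (by rewrite e1).
  have := modS_cong e4; rewrite -e3 => e5.
  have h2 : 2 < n.+1 by lia.
  by move: (mn2 i h2); rewrite e5 eqxx.
Qed.

Theorem theorem2 (n : nat) (hn : 3 <= n) :
  ~ representable (@line_rel _ (@wheel_rel n.+1)).
Proof.
move=> [w [hall hrep]].
have hirr : forall x, ~~ @line_rel _ (@wheel_rel n.+1) x x.
  by move=> x; rewrite /line_rel eqxx.
have hsym : forall x y, @line_rel _ (@wheel_rel n.+1) x y -> @line_rel _ (@wheel_rel n.+1) y x.
  by move=> x y; rewrite /line_rel eq_sym setIC.
have H := HM_word hall hrep hirr hsym.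
have H' : HM (ADJ n) (lew w) := H.
have hn1 : 1 < n by lia.
have hn2 : 2 < n by lia.
have W := wheelV hn1 hn2.
apply: (wheel_contra H' W); lia.
Qed.
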